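(* For $i\ge1$ let $u^i:[0,1]\to{\bf Q}_2(\mathbb{R})$ be the pluri-diamond with $u^i(1/3)=2[[0]]$ which is a diamond exactly above the closed middle-third intervals removed in the first $i$ steps of the construction of the Cantor ternary set (i.e. above $[1/3,2/3]$ for $i=1$; above $[1/3,2/3],[1/9,2/9],[7/9,8/9]$ for $i=2$; etc.) and is of the form $x\mapsto2[[x+p]]$ on each remaining interval. Write $u^i=[[u^i_{\min}]]+[[u^i_{\max}]]$ with $u^i_{\min}\le u^i_{\max}$. Suppose that along a subsequence $u^i_{\min}\to u_{\min}$ and $u^i_{\max}\to u_{\max}$ uniformly on $[0,1]$, and set $u=[[u_{\min}]]+[[u_{\max}]]$. Then $u$ is a Dirichlet $4$-quasiminimizer on $(0,1)$ (for every interval $(a,b)\subset(0,1)$, $\mathrm{Dir}(u;(a,b))\le4\,\mathrm{Dir}(v;(a,b))$ with $v$ Dirichlet minimizing on $(a,b)$ with $v(a)=u(a)$, $v(b)=u(b)$), and the branch set of $u$ is the Cantor ternary set $T$.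
   Context: ${\bf Q}_2(\mathbb{R})$ is the space of unordered pairs $[[x]]+[[y]]$ of reals with metric $\mathcal{G}([[x_1]]+[[x_2]],[[y_1]]+[[y_2]])=\min_\sigma(\sum_i|x_i-y_{\sigma(i)}|^2)^{1/2}$. For Lipschitz $u=[[u_1]]+[[u_2]]$ with $u_1\le u_2$, $\mathrm{Dir}(u;I)=\int_I(u_1')^2+(u_2')^2dx$; Dirichlet minimizing with given endpoint values means minimizing $\mathrm{Dir}$ among (Sobolev) ${\bf Q}_2(\mathbb{R})$-valued maps with those endpoint values. A diamond above $[a,b]$ is a map whose graph is the parallelogram with vertices $(a,h),((a+b)/2,h),((a+b)/2,h+(b-a)/2),(b,h+(b-a)/2)$ for some $h\in\mathbb{R}$. A pluri-diamond is a continuous $u:[0,1]\to{\bf Q}_2(\mathbb{R})$ admitting a partition of $[0,1]$ into intervals on each of which $u$ is a diamond or of the form $x\mapsto2[[x+p]]$, $p\in\mathbb{R}$. For a continuous multiple-valued $u$, let $\sigma(x)=\mathrm{card}(\mathrm{spt}\,u(x))$; the branch set of $u$ is the set of points where $\sigma$ is discontinuous. $T=\bigcap_iT_i$ with $T_1=[0,1/3]\cup[2/3,1]$, $T_2=[0,1/9]\cup[2/9,1/3]\cup[2/3,7/9]\cup[8/9,1]$, etc. *)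

(* Defs.v *)
From HB Require Import structures.
From mathcomp Require Import all_boot all_order all_algebra.
From mathcomp Require Import all_classical all_reals all_analysis.
Set Implicit Arguments. Unset Strict Implicit. Unset Printing Implicit Defensive.
Import Order.TTheory GRing.Theory Num.Theory.
Import numFieldNormedType.Exports.
Local Open Scope classical_set_scope.
Local Open Scope ring_scope.

(* cantor_idx k m : m < 3^k has k ternary digits, all in {0,2}.
   The closed intervals [m/3^k, (m+1)/3^k] with cantor_idx k m are
   exactly the components of T_k (T_0 = [0,1]). *)
Fixpoint cantor_idx (k m : nat) : bool :=
  if k is k'.+1 then ((m %% 3) != 1)%N && cantor_idx k' (m %/ 3)
  else (m == 0)%N.

Section Defs.
Variable R : realType.

Definition T_step (i : nat) : set R :=
  [set x | exists m : nat, cantor_idx i m /\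
       (m%:R / 3 ^+ i <= x <= m.+1%:R / 3 ^+ i)].

Definition cantorT : set R := [set x | forall i : nat, (0 < i)%N -> T_step i x].

(* The sorted pair (lo, hi) is a diamond above [a,b]: its graph is the
   boundary of the parallelogram with vertices (a,h), ((a+b)/2,h),
   ((a+b)/2,h+(b-a)/2), (b,h+(b-a)/2). *)
Definition diamond_on (a b : R) (lo hi : R -> R) : Prop :=
  exists h : R, forall x, a <= x <= b ->
    lo x = h + Num.max 0 (x - (a + b) / 2) /\
    hi x = h + Num.min (x - a) ((b - a) / 2).

Definition double_line_on (a b : R) (lo hi : R -> R) : Prop :=
  exists p : R, forall x, a <= x <= b -> lo x = x + p /\ hi x = x + p.

(* u^i = [[lo]] + [[hi]] (lo <= hi) is the pluri-diamond with u^i(1/3) = 2[[0]]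
   which is a diamond above each middle-third interval removed at steps
   1..i (at step k: [(3m+1)/3^k, (3m+2)/3^k] with [m/3^(k-1),(m+1)/3^(k-1)]
   a component of T_(k-1)) and of the form 2[[x+p]] on each component of T_i. *)
Definition cantor_pluridiamond (i : nat) (lo hi : R -> R) : Prop :=
  ({within `[0, 1], continuous lo} /\ {within `[0, 1], continuous hi}) /\
  [/\ (forall x, 0 <= x <= 1 -> lo x <= hi x),
      lo (1 / 3) = 0, hi (1 / 3) = 0,
      (forall k m : nat, (0 < k <= i)%N -> cantor_idx k.-1 m ->
          diamond_on ((3 * m + 1)%:R / 3 ^+ k) ((3 * m + 2)%:R / 3 ^+ k) lo hi) &
      (forall m : nat, cantor_idx i m ->
          double_line_on (m%:R / 3 ^+ i) (m.+1%:R / 3 ^+ i) lo hi)].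

Definition unif_cvg01 (f : nat -> R -> R) (g : R -> R) : Prop :=
  forall e : R, 0 < e -> exists N : nat, forall n : nat, (N <= n)%N ->
    forall x, 0 <= x <= 1 -> `|f n x - g x| < e.

Definition Dir (f1 f2 : R -> R) (a b : R) : \bar R :=
  (\int[lebesgue_measure]_(x in `[a, b]) ((derive1 f1 x) ^+ 2 + (derive1 f2 x) ^+ 2)%:E)%E.

(* real-valued W^{1,2}(a,b), via its absolutely continuous representative on [a,b] *)
Definition W12 (a b : R) (f : R -> R) : Prop :=
  exists g : R -> R,
    measurable_fun `[a, b] g /\
    (\int[lebesgue_measure]_(x in `[a, b]) ((g x) ^+ 2)%:E < +oo)%E /\
    forall x, a <= x <= b ->
      f x = f a + Rintegral lebesgue_measure `[a, x] g.

(* Q_2(R)-valued Sobolev maps on (a,b) written as sorted pairs v1 <= v2,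
   with endpoint values v(a) = [[ya1]]+[[ya2]], v(b) = [[yb1]]+[[yb2]]
   (ya1 <= ya2, yb1 <= yb2). *)
Definition competitor (a b ya1 ya2 yb1 yb2 : R) (v1 v2 : R -> R) : Prop :=
  [/\ W12 a b v1, W12 a b v2 & (forall x, a <= x <= b -> v1 x <= v2 x)] /\
  [/\ v1 a = ya1, v2 a = ya2, v1 b = yb1 & v2 b = yb2].

Definition dir_minimizing (a b ya1 ya2 yb1 yb2 : R) (v1 v2 : R -> R) : Prop :=
  competitor a b ya1 ya2 yb1 yb2 v1 v2 /\
  forall w1 w2, competitor a b ya1 ya2 yb1 yb2 w1 w2 ->
    (Dir v1 v2 a b <= Dir w1 w2 a b)%E.

Definition dir_quasiminimizer (K : R) (umin umax : R -> R) : Prop :=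
  forall a b : R, 0 <= a -> a < b -> b <= 1 ->
    forall v1 v2 : R -> R,
      dir_minimizing a b (umin a) (umax a) (umin b) (umax b) v1 v2 ->
      (Dir umin umax a b <= K%:E * Dir v1 v2 a b)%E.

Definition card_spt (umin umax : R -> R) (x : R) : R :=
  if umin x == umax x then 1 else 2.

Definition branch_set (umin umax : R -> R) : set R :=
  [set x : R | 0 <= x <= 1 /\
     ~ (card_spt umin umax @ within `[0, 1] (nbhs x) --> card_spt umin umax x)].

End Defs.

(* Main.v *)
Require Import Defs.
From HB Require Import structures.
From mathcomp Require Import all_boot all_order all_algebra.
From mathcomp Require Import all_classical all_reals all_analysis.
From mathcomp Require Import ring lra zify measurable_realfun.
Import Order.TTheory GRing.Theory Num.Theory.
Import numFieldNormedType.Exports.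
Local Open Scope classical_set_scope.
Local Open Scope ring_scope.


Section PartA.
Variable R : realType.

Definition P3 (lo hi : R -> R) (y z : R) : Prop :=
  [/\ 0 <= lo z - lo y <= z - y, 0 <= hi z - hi y <= z - y &
      z - y <= (lo z - lo y) + (hi z - hi y)].

Lemma P3_refl lo hi y : P3 lo hi y y.
Proof. by split; rewrite !subrr ?lexx ?addr0. Qed.

Lemma P3_trans lo hi y z w : y <= z -> z <= w ->
  P3 lo hi y z -> P3 lo hi z w -> P3 lo hi y w.
Proof.
move=> yz zw [/andP[a1 a2] /andP[b1 b2] c] [/andP[a3 a4] /andP[b3 b4] c2].
split; first (apply/andP; split); try (apply/andP; split); lra.
Qed.

Lemma diamond_P3 a b lo hi y z : diamond_on a b lo hi ->
  a <= y -> y <= z -> z <= b -> P3 lo hi y z.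
Proof.
move=> [h H] ay yz zb.
have [ly hy] := H y (ltac:(apply/andP; split; lra)).
have [lz hz] := H z (ltac:(apply/andP; split; lra)).
rewrite /P3 ly hy lz hz.
case: (leP 0 (y - (a + b) / 2)) => c1;
case: (leP 0 (z - (a + b) / 2)) => c2;
case: (leP (y - a) ((b - a) / 2)) => c3;
case: (leP (z - a) ((b - a) / 2)) => c4;
split; try (apply/andP; split); lra.
Qed.

Lemma line_P3 a b lo hi y z : double_line_on a b lo hi ->
  a <= y -> y <= z -> z <= b -> P3 lo hi y z.
Proof.
move=> [p H] ay yz zb.
have [ly hy] := H y (ltac:(apply/andP; split; lra)).
have [lz hz] := H z (ltac:(apply/andP; split; lra)).
rewrite /P3 ly hy lz hz.
split; try (apply/andP; split); lra.
Qed.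

Lemma local_global (P : R -> R -> Prop) :
  (forall y, P y y) ->
  (forall y z w, y <= z -> z <= w -> P y z -> P z w -> P y w) ->
  (forall x, 0 <= x -> x < 1 -> exists2 d, 0 < d &
      forall z, x <= z -> z <= 1 -> z < x + d -> P x z) ->
  (forall x, 0 < x -> x <= 1 -> exists2 d, 0 < d &
      forall y, 0 <= y -> y <= x -> x - d < y -> P y x) ->
  forall y z, 0 <= y -> y <= z -> z <= 1 -> P y z.
Proof.
move=> Prefl Ptr Hr Hl y z y0 yz z1.
pose A := [set t | y <= t <= z /\ P y t].
have Ay : A y by split; [apply/andP; split; lra | exact: Prefl].
have hs : has_sup A.
  split; first by exists y.
  by exists z => t [/andP[_ ?] _].
have sz : sup A <= z by apply: ge_sup; [exists y | move=> t [/andP[_ ?] _]].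
have ys : y <= sup A by exact: (sup_upper_bound hs Ay).
have As : A (sup A).
  have [->|ylt] := eqVneq (sup A) y; first by [].
  have ylt' : y < sup A by rewrite lt_def ylt ys.
  have [d d0 Hd] := Hl (sup A) (ltac:(lra)) (ltac:(lra)).
  have [t At td] := sup_adherent d0 hs.
  have ts : t <= sup A by exact: (sup_upper_bound hs At).
  case: At => /andP[yt tz] Pyt.
  split; first (apply/andP; split; lra).
  apply: (Ptr y t) => //; apply: Hd; lra.
have [//|slt] := eqVneq (sup A) z.
  by move=> <-; case: As.
have slt' : sup A < z by rewrite lt_neqAle slt sz.
have [d d0 Hd] := Hr (sup A) (ltac:(lra)) (ltac:(lra)).
exfalso.
pose t := Num.min (sup A + d / 2) z.
have At : A t.
  case: As => _ Pys.
  rewrite /t; case: (leP (sup A + d / 2) z) => c.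
  - split; first (apply/andP; split; lra).
    apply: (Ptr y (sup A)) => //; try lra; apply: Hd; lra.
  - split; first (apply/andP; split; lra).
    apply: (Ptr y (sup A)) => //; try lra; apply: Hd; lra.
have := sup_upper_bound hs At.
rewrite /t; case: (leP (sup A + d / 2) z) => c; lra.
Qed.


Lemma cantor_idx3 i m : cantor_idx i.+1 (3 * m) = cantor_idx i m.
Proof.
rewrite /=. have -> : ((3 * m) %% 3 = 0)%N by lia.
have -> : ((3 * m) %/ 3 = m)%N by lia. by [].
Qed.

Lemma cantor_idx3' i m : cantor_idx i.+1 (3 * m + 2) = cantor_idx i m.
Proof.
rewrite /=. have -> : ((3 * m + 2) %% 3 = 2)%N by lia.
have -> : ((3 * m + 2) %/ 3 = m)%N by lia. by [].
Qed.

Lemma cantor_idx_lt {i m} : cantor_idx i m -> (m < 3 ^ i)%N.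
Proof.
elim: i m => [|i IH] m /=; first by move/eqP->.
move=> /andP[_ /IH] h. rewrite expnS. lia.
Qed.



Lemma cover_gen (InC InR : R -> R -> R -> Prop) x :
  InC 0 1 x ->
  (forall a t, 0 < t -> InC a (a + 3 * t) x ->
     InC a (a + t) x \/ InR (a + t) (a + 2 * t) x \/ InC (a + 2 * t) (a + 3 * t) x) ->
  forall i, (exists m, cantor_idx i m /\ InC (m%:R / 3 ^+ i) (m.+1%:R / 3 ^+ i) x) \/
     (exists k m, (0 < k <= i)%N /\ cantor_idx k.-1 m /\
        InR ((3 * m + 1)%:R / 3 ^+ k) ((3 * m + 2)%:R / 3 ^+ k) x).
Proof.
move=> H0 Hs; elim=> [|i [[m [cm Hm]]|[k [m [hk [cm Hm]]]]]].
- left; exists 0%N; split => //.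
  by rewrite expr0 !divr1.
- set t := (3 ^+ i.+1 : R)^-1.
  have t0 : 0 < t by rewrite /t invr_gt0 exprn_gt0.
  set a := (3 * m)%:R * t.
  have e1 : m%:R / 3 ^+ i = a by rewrite /a /t exprS natrM; field.
  have e2 : m.+1%:R / 3 ^+ i = a + 3 * t.
    by rewrite /a /t exprS -addn1 natrD natrM; field.
  rewrite e1 e2 in Hm.
  have f1 : (3 * m)%:R / 3 ^+ i.+1 = a by [].
  have f2 : (3 * m).+1%:R / 3 ^+ i.+1 = a + t by rewrite -addn1 natrD mulrDl mul1r.
  have f3 : (3 * m + 1)%:R / 3 ^+ i.+1 = a + t by rewrite natrD mulrDl mul1r.
  have f4 : (3 * m + 2)%:R / 3 ^+ i.+1 = a + 2 * t by rewrite natrD mulrDl.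
  have f5 : (3 * m + 2).+1%:R / 3 ^+ i.+1 = a + 3 * t.
    by rewrite -addn1 -addnA natrD mulrDl.
  case: (Hs a t t0 Hm) => [h|[h|h]].
  + left; exists (3 * m)%N; split; first by rewrite cantor_idx3.
    by rewrite f1 f2.
  + right; exists i.+1, m; split; first by rewrite ltn0Sn leqnn.
    split => //.
    by rewrite f3 f4.
  + left; exists (3 * m + 2)%N; split; first by rewrite cantor_idx3'.
    by rewrite f4 f5.
- right; exists k, m; split => //; lia.
Qed.


Lemma pd_P3 {i lo hi} : (0 < i)%N -> cantor_pluridiamond i lo hi ->
  forall y z, 0 <= y -> y <= z -> z <= 1 -> P3 lo hi y z.
Proof.
move=> i0 [_ [_ _ _ Hd Hl]].
apply: local_global; [exact: P3_refl|exact: P3_trans| |].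
- move=> x x0 x1.
  have := @cover_gen (fun p q x => p <= x < q) (fun p q x => p <= x < q) x
    (ltac:(apply/andP; split; lra)) _ i.
  case.
  + move=> a t t0 /andP[h1 h2].
    case: (ltP x (a + t)) => c1; first by left; apply/andP; split; lra.
    case: (ltP x (a + 2 * t)) => c2; first by right; left; apply/andP; split; lra.
    by right; right; apply/andP; split; lra.
  + move=> [m [cm /andP[h1 h2]]].
    exists (m.+1%:R / 3 ^+ i - x); first lra.
    move=> z xz z1 zd; apply: (@line_P3 _ _ _ _ _ _ (Hl m cm)) => //; lra.
  + move=> [k [m [hk [cm /andP[h1 h2]]]]].
    exists ((3 * m + 2)%:R / 3 ^+ k - x); first lra.
    move=> z xz z1 zd; apply: (@diamond_P3 _ _ _ _ _ _ (Hd k m hk cm)) => //; lra.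
- move=> x x0 x1.
  have := @cover_gen (fun p q x => p < x <= q) (fun p q x => p < x <= q) x
    (ltac:(apply/andP; split; lra)) _ i.
  case.
  + move=> a t t0 /andP[h1 h2].
    case: (leP x (a + t)) => c1; first by left; apply/andP; split; lra.
    case: (leP x (a + 2 * t)) => c2; first by right; left; apply/andP; split; lra.
    by right; right; apply/andP; split; lra.
  + move=> [m [cm /andP[h1 h2]]].
    exists (x - m%:R / 3 ^+ i); first lra.
    move=> y y0 yx yd; apply: (@line_P3 _ _ _ _ _ _ (Hl m cm)) => //; lra.
  + move=> [k [m [hk [cm /andP[h1 h2]]]]].
    exists (x - (3 * m + 1)%:R / 3 ^+ k); first lra.
    move=> y y0 yx yd; apply: (@diamond_P3 _ _ _ _ _ _ (Hd k m hk cm)) => //; lra.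
Qed.


Section Lim.
Variables (lo hi : nat -> R -> R) (phi : nat -> nat) (umin umax : R -> R).
Hypothesis Hpd : forall i, (0 < i)%N -> cantor_pluridiamond i (lo i) (hi i).
Hypothesis Hphi : {homo phi : m n / (m < n)%N}.
Hypothesis Hlo : unif_cvg01 (fun n => lo (phi n)) umin.
Hypothesis Hhi : unif_cvg01 (fun n => hi (phi n)) umax.

Lemma phi_ge n : (n <= phi n)%N.
Proof. elim: n => // n IH; have := Hphi n n.+1 (ltnSn n); lia. Qed.

Lemma approx k e : 0 < e -> exists n, (k <= phi n)%N /\ (0 < phi n)%N /\
  forall x, 0 <= x <= 1 ->
   (umin x - e < lo (phi n) x < umin x + e) /\ (umax x - e < hi (phi n) x < umax x + e).
Proof.
move=> e0; have [N1 H1] := Hlo e e0; have [N2 H2] := Hhi e e0.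
exists (maxn (maxn N1 N2) k.+1).
have hn := phi_ge (maxn (maxn N1 N2) k.+1).
split; first lia. split; first lia.
move=> x x01.
have := H1 (maxn (maxn N1 N2) k.+1) (ltac:(lia)) x x01.
have := H2 (maxn (maxn N1 N2) k.+1) (ltac:(lia)) x x01.
rewrite !ltr_norml => /andP[a1 a2] /andP[b1 b2].
by split; apply/andP; split; lra.
Qed.

Lemma lim_P3 y z : 0 <= y -> y <= z -> z <= 1 -> P3 umin umax y z.
Proof.
move=> y0 yz z1.
have key : forall e, 0 < e -> exists i, P3 (lo i) (hi i) y z /\
   (umin y - e < lo i y < umin y + e) /\ (umax y - e < hi i y < umax y + e) /\
   (umin z - e < lo i z < umin z + e) /\ (umax z - e < hi i z < umax z + e).
  move=> e e0; have [n [_ [pn Hn]]] := approx 0 e e0.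
  exists (phi n); split; first exact: (pd_P3 pn (Hpd _ pn)).
  have [a b] := Hn y (ltac:(apply/andP; split; lra)).
  have [c d] := Hn z (ltac:(apply/andP; split; lra)).
  by [].
split; [apply/andP; split|apply/andP; split|];
  apply/ler_addgt0Pr => e e0;
  have [i [[/andP[p1 p2] /andP[p3 p4] p5] [/andP[a1 a2] [/andP[b1 b2] [/andP[c1 c2] /andP[d1 d2]]]]]] := key (e / 8) (ltac:(lra));
  lra.
Qed.

Lemma T_eq {x} : cantorT x -> umin x = umax x.
Proof.
move=> Tx.
have [m [cm /andP[h1 h2]]] := Tx 1%N isT.
have x01 : 0 <= x <= 1.
  have := cantor_idx_lt cm; rewrite expn1 => hm.
  have hm' : (m.+1%:R : R) <= 3 by rewrite ler_nat.
  apply/andP; split.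
    by apply: le_trans h1; rewrite divr_ge0.
  apply: (le_trans h2); rewrite expr1 ler_pdivrMr //; lra.
apply/eqP; rewrite eq_le; apply/andP; split; apply/ler_addgt0Pr => e e0;
  have [n [_ [pn Hn]]] := approx 0 (e / 2) (ltac:(lra) : 0 < e / 2);
  have [/andP[a1 a2] /andP[b1 b2]] := Hn x x01;
  have [m' [cm' hx]] := Tx (phi n) pn;
  have [_ [_ _ _ _ Hl]] := Hpd _ pn;
  have [p Hp] := Hl m' cm';
  have [l1 l2] := Hp x hx; lra.
Qed.

Lemma removed_lt {k m x} : (0 < k)%N -> cantor_idx k.-1 m ->
  (3 * m + 1)%:R / 3 ^+ k < x < (3 * m + 2)%:R / 3 ^+ k -> umin x < umax x.
Proof.
move=> k0 cm /andP[] h1 h2.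
move: h1 h2.
set p := ((3 * m + 1)%:R / 3 ^+ k). set q := ((3 * m + 2)%:R / 3 ^+ k).
move=> h1 h2.
have x01 : 0 <= x <= 1.
  have := cantor_idx_lt cm => hm.
  have hk : (3 * m + 2 <= 3 ^ k)%N.
    by rewrite -(prednK k0) expnS; lia.
  have hk' : ((3 * m + 2)%:R : R) <= 3 ^+ k by rewrite -natrX ler_nat.
  apply/andP; split.
    by apply: le_trans (ltW h1); rewrite divr_ge0.
  apply: (le_trans (ltW h2)); rewrite ler_pdivrMr ?exprn_gt0 //; lra.
set Dv := Num.min (x - p) ((q - p) / 2) - Num.max 0 (x - (p + q) / 2).
have D0 : 0 < Dv.
  rewrite /Dv; case: (leP (x - p) ((q - p) / 2)) => c1;
  case: (leP 0 (x - (p + q) / 2)) => c2; lra.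
have [n [kn [pn Hn]]] := approx k (Dv / 2) (ltac:(lra) : 0 < Dv / 2).
have [/andP[a1 a2] /andP[b1 b2]] := Hn x x01.
have [_ [_ _ _ Hd _]] := Hpd _ pn.
have kk : (0 < k <= phi n)%N by rewrite k0 kn.
have [h Hh] := Hd k m kk cm; rewrite -/p -/q in Hh.
have [e1 e2] := Hh x (ltac:(apply/andP; split; lra)).
have : hi (phi n) x - lo (phi n) x = Dv by rewrite e1 e2 /Dv; lra.
lra.
Qed.


Lemma notT_removed {x : R} : 0 <= x <= 1 -> ~ cantorT x ->
  exists k m, (0 < k)%N /\ cantor_idx k.-1 m /\
    (3 * m + 1)%:R / 3 ^+ k < x < (3 * m + 2)%:R / 3 ^+ k.
Proof.
move=> x01 nT.
have [i [i0 nTi]] : exists i, (0 < i)%N /\ ~ T_step i x.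
  apply: contra_notP nT => H i i0.
  by apply: contrapT => nt; apply: H; exists i.
have := @cover_gen (fun p q x => p <= x <= q) (fun p q x => p < x < q) x
    x01 _ i.
case.
- move=> a t t0 /andP[h1 h2].
  case: (leP x (a + t)) => c1; first by left; apply/andP; split; lra.
  case: (ltP x (a + 2 * t)) => c2; first by right; left; apply/andP; split; lra.
  by right; right; apply/andP; split; lra.
- by move=> [m [cm hm]]; exfalso; apply: nTi; exists m.
- move=> [k [m [/andP[k0 _] [cm hm]]]]; by exists k, m.
Qed.

Lemma card_spt_removed {k m} {x : R} : (0 < k)%N -> cantor_idx k.-1 m ->
  (3 * m + 1)%:R / 3 ^+ k < x < (3 * m + 2)%:R / 3 ^+ k -> card_spt umin umax x = 2.
Proof.
move=> k0 cm hx; rewrite /card_spt.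
by have := removed_lt k0 cm hx; rewrite lt_neqAle => /andP[/negbTE -> _].
Qed.

Lemma branch_notT (x : R) : 0 <= x <= 1 -> ~ cantorT x ->
  card_spt umin umax @ within `[0, 1] (nbhs x) --> card_spt umin umax x.
Proof.
move=> x01 nT.
have [k [m [k0 [cm hx]]]] := notT_removed x01 nT.
rewrite (card_spt_removed k0 cm hx).
apply: cvg_near_cst.
have H := near_in_itvoo (ltac:(by rewrite in_itv /=) : x \in `](3 * m + 1)%:R / 3 ^+ k, (3 * m + 2)%:R / 3 ^+ k[).
rewrite near_withinE; apply: filterS H => y; rewrite in_itv /= => hy _.
exact: card_spt_removed k0 cm hy.
Qed.

Lemma branch_T (x : R) : cantorT x -> branch_set umin umax x.
Proof.
move=> Tx.
have x01 : 0 <= x <= 1.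
  have [m [cm /andP[h1 h2]]] := Tx 1%N isT.
  have := cantor_idx_lt cm; rewrite expn1 => hm.
  have hm' : (m.+1%:R : R) <= 3 by rewrite ler_nat.
  apply/andP; split.
    by apply: le_trans h1; rewrite divr_ge0.
  apply: (le_trans h2); rewrite expr1 ler_pdivrMr //; lra.
split => // /cvgrPdist_lt /(_ (1/2) ltac:(lra)).
rewrite near_withinE => /nbhs_ballP [r r0 Hr].
rewrite /card_spt (T_eq Tx) eqxx in Hr.
have [N Nr] : exists N : nat, (3 ^+ N : R)^-1 < r.
  exists (Num.Def.archi_bound r^-1).
  set N := Num.Def.archi_bound r^-1.
  have h1 : r^-1 < N%:R by apply: archi_boundP; rewrite invr_ge0 ltW.
  have h2 : (N%:R : R) <= 3 ^+ N.
    by rewrite -natrX ler_nat ltnW // ltn_expl.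
  rewrite invf_plt ?posrE ?exprn_gt0 //; lra.
have [m [cm /andP[h1 h2]]] := Tx N.+1 isT.
set E := (3 ^+ N : R).
have E0 : 0 < E by rewrite exprn_gt0.
set e := (3 ^+ N.+2 : R)^-1.
have eE : e = E^-1 / 9.
  rewrite /e /E !exprS; field; rewrite ?expf_neq0 //; lra.
have Ei : 0 < E^-1 by rewrite invr_gt0.
have a1 : m%:R / 3 ^+ N.+1 = (3 * m)%:R * e.
  rewrite eE /E natrM exprS; field; rewrite ?expf_neq0 //; lra.
have a2 : m.+1%:R / 3 ^+ N.+1 = (3 * m)%:R * e + 3 * e.
  rewrite eE /E natrM -addn1 natrD exprS; field; rewrite ?expf_neq0 //; lra.
have a3 : (3 * m + 1)%:R / 3 ^+ N.+2 = (3 * m)%:R * e + e.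
  by rewrite natrD mulrDl mul1r.
have a4 : (3 * m + 2)%:R / 3 ^+ N.+2 = (3 * m)%:R * e + 2 * e.
  by rewrite natrD mulrDl.
have m0 : 0 <= (3 * m)%:R * e by rewrite mulr_ge0 // eE; lra.
have top : (m.+1%:R / 3 ^+ N.+1 : R) <= 1.
  have := cantor_idx_lt cm => hm.
  have hm' : (m.+1%:R : R) <= 3 ^+ N.+1 by rewrite -natrX ler_nat.
  by rewrite ler_pdivrMr ?exprn_gt0 // mul1r.
rewrite a1 a2 in h1 h2 top.
pose t := (3 * m)%:R * e + 3 / 2 * e.
have ht : (3 * m + 1)%:R / 3 ^+ N.+2 < t < (3 * m + 2)%:R / 3 ^+ N.+2.
  rewrite a3 a4 /t; apply/andP; split; rewrite eE; lra.
have := Hr t.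
have nt : (umin t == umax t) = false.
  by have := removed_lt (k := N.+2) isT cm ht; rewrite lt_neqAle => /andP[/negbTE].
have bt : ball x r t.
  rewrite /ball /= ltr_norml; apply/andP; split; rewrite /t; move: h1 h2; rewrite eE => h1 h2; lra.
have it : [set` `[0, 1]] t.
  rewrite /= in_itv /=; apply/andP; split; rewrite /t; move: h1 h2 top m0; rewrite eE => h1 h2 top m0; lra.
move=> /(_ bt it) /=; rewrite nt ltr_norml; lra.
Qed.

Lemma branch_eq : branch_set umin umax = @cantorT R.
Proof.
apply/seteqP; split => x.
- move=> [x01 nc]; apply: contrapT => nT; apply: nc; exact: branch_notT.
- exact: branch_T.
Qed.

End Lim.
End PartA.


Section Anal.
Variable R : realType.

Lemma derive1_01 {F : R -> R} {x} :
  (forall y z, 0 <= y -> y <= z -> z <= 1 -> 0 <= F z - F y <= z - y) ->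
  0 < x -> x < 1 -> 0 <= derive1 F x <= 1.
Proof.
move=> HF x0 x1.
have -> : derive1 F x = lim ((fun h => h^-1 * (F (h + x) - F x)) @ 0^') by [].
have [d|nd] := pselect (cvg ((fun h => h^-1 * (F (h + x) - F x)) @ 0^')); last first.
  rewrite (dvgP nd); exact: (ltac:(apply/andP; split; lra) : (0 <= (0:R) <= 1)).
have key : \forall h \near 0^', 0 <= h^-1 * (F (h + x) - F x) <= 1.
  near=> h.
  have hne : h != 0 by near: h; exact: nbhs_dnbhs_neq.
  have hd : `|h| < Num.min x (1 - x).
    by near: h; apply: dnbhs0_lt; rewrite lt_min; apply/andP; split; lra.
  move: hd; rewrite lt_min => /andP[hd1 hd2].
  have [hp|hn] := ltP 0 h.
  + rewrite gtr0_norm // in hd1 hd2.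
    have /andP[a1 a2] := HF x (h + x) (ltW x0) (ltac:(lra)) (ltac:(lra)).
    rewrite mulrC; apply/andP; split.
      by rewrite divr_ge0 //; lra.
    by rewrite ler_pdivrMr // mul1r; lra.
  + have hn' : h < 0 by rewrite lt_neqAle hne hn.
    rewrite ltr0_norm // in hd1 hd2.
    have /andP[a1 a2] := HF (h + x) x (ltac:(lra)) (ltac:(lra)) (ltW x1).
    rewrite mulrC; apply/andP; split.
      by rewrite ler_ndivlMr // mul0r; lra.
    by rewrite ler_ndivrMr // mul1r; lra.
apply/andP; split.
  by apply: limr_ge => //; apply: filterS key => h /andP[].
by apply: limr_le => //; apply: filterS key => h /andP[].
Unshelve. all: by end_near.
Qed.

End Anal.


Section Anal2.
Variable R : realType.
Local Notation mu := (@lebesgue_measure R).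

Lemma ge0_le_integral_nm (D : set R) (f1 f2 : R -> \bar R) :
  (forall x, D x -> (0 <= f1 x)%E) -> (forall x, D x -> (f1 x <= f2 x)%E) ->
  (\int[mu]_(x in D) f1 x <= \int[mu]_(x in D) f2 x)%E.
Proof.
move=> f10 f12.
rewrite !ge0_integralE //; last by move=> x Dx; apply: le_trans (f12 _ Dx); exact: f10.
apply: le_ereal_sup => _ [h hf <-]; exists h => // x.
apply: le_trans (hf x) _; rewrite /patch; case: ifPn => // /set_mem Dx.
exact: f12.
Qed.

Lemma Dir_le2 (f1 f2 : R -> R) a b : a < b ->
  (forall x, a < x < b -> (derive1 f1 x) ^+ 2 + (derive1 f2 x) ^+ 2 <= 2) ->
  (Dir f1 f2 a b <= (2 * (b - a))%:E)%E.
Proof.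
move=> ab Hb; rewrite /Dir.
set f := fun x => (derive1 f1 x) ^+ 2 + (derive1 f2 x) ^+ 2.
have f0 : forall x, 0 <= f x by move=> x; rewrite /f addr_ge0 // sqr_ge0.
pose S := [set a] `|` [set b].
have mS : measurable S by apply: measurableU; exact: measurable_set1.
pose K := f a + f b.
have K0 : 0 <= K by rewrite /K addr_ge0.
apply: (@le_trans _ _ (\int[mu]_(x in `[a, b]) (2 + K * \1_S x)%:E)%E).
  apply: ge0_le_integral_nm => [x _|x]; first by rewrite lee_fin; exact: f0.
  rewrite /= in_itv /= => /andP[xa xb]; rewrite lee_fin; change (f x <= 2 + K * \1_S x).
  have [xa'|] := eqVneq x a.
    rewrite xa' indicE mem_set; last by left.
    by rewrite mulr1 /K; have := f0 b; have := f0 a; lra.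
  have [xb'|] := eqVneq x b.
    rewrite xb' indicE mem_set; last by right.
    by rewrite mulr1 /K; have := f0 b; have := f0 a; lra.
  move=> nb na.
  have : a < x < b by apply/andP; split; [rewrite lt_def na xa | rewrite lt_def eq_sym nb xb].
  move=> /Hb; rewrite -/(f x) => fx2.
  have : 0 <= K * \1_S x by rewrite mulr_ge0 // indicE; case: (_ \in _).
  lra.
rewrite (_ : (fun x => (2 + K * \1_S x)%:E) = (fun x => (cst 2%:E x + (K * \1_S x)%:E)))%E; last by apply/funext => x.
rewrite ge0_integralD //; last 3 first.
- by move=> x _; rewrite /= lee_fin.
- by move=> x _; rewrite lee_fin mulr_ge0 // indicE; case: (_ \in _).
- apply/measurable_EFinP; apply: measurable_funM; first exact: measurable_cst.
  exact: measurable_indic.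
rewrite integral_cst //= lebesgue_measure_itv /= lte_fin ab.
under eq_integral do rewrite EFinM.
rewrite ge0_integralZl_EFin; [|by []|by move=> x _; rewrite lee_fin indicE; case: (_ \in _)|by apply/measurable_EFinP; exact: measurable_indic|exact: K0].
rewrite integral_indic //.
set M := (X in (_ + _ * X <= _)%E).
have -> : M = 0%E.
  apply/eqP; rewrite eq_le measure_ge0 andbT.
  apply: (@le_trans _ _ (mu S)).
    apply: le_measure; [rewrite inE; exact: measurableI mS (measurable_itv _)| rewrite inE; exact: mS| exact: subIsetl].
  have := @measureU2 _ _ _ mu [set a] [set b] (measurable_set1 a) (measurable_set1 b).
  have h1 : mu [set a] = 0%E by exact: lebesgue_measure_set1.
  have h2 : mu [set b] = 0%E by exact: lebesgue_measure_set1.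
  move=> h; apply: (le_trans h).
  by rewrite -[X in (X + _)%E]/(mu [set a]) -[X in (_ + X)%E]/(mu [set b]) h1 h2 adde0.
by rewrite mule0 adde0 -EFinD -EFinM.
Qed.


Lemma cst_integrable (a b k : R) : mu.-integrable `[a, b] (EFin \o cst k).
Proof.
apply: measurable_bounded_integrable.
- exact: measurable_itv.
- rewrite -[X in (X < _)%E]/(lebesgue_measure [set` `[a, b]]) lebesgue_measure_itv /=.
  case: ifP => _; last exact: ltry.
  by rewrite -EFinD ltry.
- exact: measurable_cst.
- exact: bounded_cst.
Qed.

Lemma sq_integrable {a b : R} {g : R -> R} :
  measurable_fun `[a, b] g ->
  (\int[mu]_(x in `[a, b]) ((g x) ^+ 2)%:E < +oo)%E ->
  mu.-integrable `[a, b] (EFin \o (fun x => g x ^+ 2)).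
Proof.
move=> mg fin; apply/integrableP; split.
  apply/measurable_EFinP.
  have -> : (fun x => g x ^+ 2) = g \* g by apply/funext => x; rewrite /= expr2.
  exact: measurable_funM.
apply: le_lt_trans fin; rewrite le_eqVlt; apply/orP; left; apply/eqP.
apply: eq_integral => x _.
by rewrite /= ?abse_EFin ger0_norm // sqr_ge0.
Qed.

Lemma g_integrable {a b : R} {g : R -> R} :
  measurable_fun `[a, b] g ->
  (\int[mu]_(x in `[a, b]) ((g x) ^+ 2)%:E < +oo)%E ->
  mu.-integrable `[a, b] (EFin \o g).
Proof.
move=> mg fin.
have i2 := sq_integrable mg fin.
have i1 : mu.-integrable `[a, b] (EFin \o (fun x => 1 + g x ^+ 2)).
  refine (eq_integrable _ (fun x : measurableTypeR R => ((1:R)%:E + (g x ^+ 2)%:E)%E) _ _ _).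
  - exact: measurable_itv.
  - by move=> x _; rewrite /= EFinD.
  - apply: (integrableD _ (f := EFin \o cst (1:R))) => //.
    exact: cst_integrable.
apply: le_integrable i1 => //.
  exact/measurable_EFinP.
move=> x _; rewrite /= ?abse_EFin lee_fin.
rewrite (ger0_norm (_ : 0 <= 1 + g x ^+ 2)); last by rewrite addr_ge0 // sqr_ge0.
have -> : g x ^+ 2 = `|g x| ^+ 2 by rewrite real_normK // num_real.
have := sqr_ge0 (`|g x| - 1 / 2).
have := normr_ge0 (g x).
nra.
Qed.


Lemma W12_deriv {a b : R} {f : R -> R} : a < b -> W12 a b f ->
  exists (g : R -> R) (N : set R), [/\ measurable N, mu N = 0%E, measurable_fun `[a, b] g &
      (\int[mu]_(x in `[a, b]) ((g x) ^+ 2)%:E < +oo)%E] /\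
      (forall x, a < x -> x < b -> ~ N x -> derive1 f x = g x) /\
      f b = f a + Rintegral mu `[a, b] g.
Proof.
move=> ab [g [mg [fin Hf]]].
have ig := g_integrable mg fin.
pose G := g \_ `[a, b].
have lG : locally_integrable setT G.
  by apply: integrable_locally_restrict => //; exact: measurable_itv.
have [N [mN N0 HN]] := lebesgue_differentiation lG.
exists g, N; split => //; split; last first.
  by apply: Hf; apply/andP; split; [exact: ltW|exact: lexx].
move=> x ax xb nN.
have lx : lebesgue_pt G x.
  by apply: contrapT => h; apply: nN; apply: HN; exact: h.
have Gin : forall y, a <= y -> y <= b -> G y = g y.
  by move=> y ay yb; rewrite /G patchE mem_set //= in_itv /= ay yb.
have iG : mu.-integrable [set` Interval (BLeft a) (BRight b)] (EFin \o G).
  refine (eq_integrable _ _ _ _ ig); first exact: measurable_itv.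
  by move=> y; rewrite inE /= in_itv /= => /andP[ay yb]; rewrite Gin.
have ax' : (BLeft a < BRight x)%O by rewrite bnd_simp ltW.
have H0 := FTC1_lebesgue_pt xb iG.
have ax2 : (BLeft a < BRight x)%E.
  by rewrite /= lte_fin.
have [dF F'] := H0 ax2 lx.
set F := fun y => Rintegral mu [set` Interval (BLeft a) (BRight y)] G.
pose qF := fun h => h^-1 * (F (h + x) - F x).
have eqq : (fun h => h^-1 *: (F (h *: 1 + x) - F x)) = qF.
  by apply/funext => h; rewrite /qF [X in F (X + _)]mulr1.
have cF : qF @ 0^' --> g x.
  move: dF; rewrite /derivable eqq => dF.
  have <- : lim (qF @ 0^') = g x.
    by rewrite -(Gin x (ltW ax) (ltW xb)) -F'.
  exact: dF.
pose qf := fun h => h^-1 * (f (h + x) - f x).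
have FE : forall y, a <= y -> y <= b -> f y = f a + F y.
  move=> y ay yb; rewrite Hf; last by rewrite ay yb.
  congr (_ + _); rewrite /F; apply: eq_Rintegral => t; rewrite inE /= in_itv /= => /andP[ta ty].
  by rewrite mem_set //= in_itv /= ta (le_trans ty yb).
have cf : qf @ 0^' --> g x.
  apply: cvg_trans cF; apply: near_eq_cvg.
  near=> h.
  have hd : `|h| < Num.min (x - a) (b - x).
    by near: h; apply: dnbhs0_lt; rewrite lt_min; apply/andP; split; lra.
  move: hd; rewrite lt_min => /andP[hd1 hd2].
  have hh : - `|h| <= h <= `|h| by rewrite -ler_norml.
  rewrite /qF /qf (FE x (ltW ax) (ltW xb)) (FE (h + x)).
  + by congr (_ * _); ring.
  + move: hh => /andP[] *; lra.
  + move: hh => /andP[] *; lra.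
have -> : derive1 f x = lim (qf @ 0^') by [].
by apply: cvg_lim => //; exact: Rhausdorff.
Unshelve. all: by end_near.
Qed.


Lemma ge0_le_integral_dom (D D' : set R) (f : R -> \bar R) : D' `<=` D ->
  (forall x, D x -> (0 <= f x)%E) ->
  (\int[mu]_(x in D') f x <= \int[mu]_(x in D) f x)%E.
Proof.
move=> DD f0.
rewrite !ge0_integralE //; last by move=> x /DD /f0.
apply: le_ereal_sup => _ [h hf <-]; exists h => // x.
apply: le_trans (hf x) _; rewrite /patch; case: ifPn => [/set_mem xD'|_].
  by rewrite mem_set //; exact: DD.
by case: ifPn => // /set_mem /f0.
Qed.

Lemma mu_itv (a b : R) : a < b -> mu `[a, b] = (b - a)%:E.
Proof.
move=> ab.
rewrite -[LHS]/(lebesgue_measure [set` `[a, b]]) lebesgue_measure_itv /= lte_fin ab.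
by rewrite -EFinD.
Qed.

Lemma intZ {a b : R} (k : R) {g : R -> R} : mu.-integrable `[a, b] (EFin \o g) ->
  mu.-integrable `[a, b] (EFin \o (fun x => k * g x)).
Proof.
move=> ig.
have h : mu.-integrable `[a, b] (fun x => k%:E * (EFin \o g) x)%E.
  by apply: integrableZl => //; exact: measurable_itv.
refine (eq_integrable _ _ _ _ h); first exact: measurable_itv.
by move=> x _; rewrite /= EFinM.
Qed.

Lemma int_lin {a b : R} (k c : R) {g : R -> R} : mu.-integrable `[a, b] (EFin \o g) ->
  mu.-integrable `[a, b] (EFin \o (fun x => k * g x + c)).
Proof.
move=> ig.
have h : mu.-integrable `[a, b] ((EFin \o (fun x => (k * g x)%R)) \+ (EFin \o cst c))%E.
  apply: integrableD; [exact: measurable_itv|exact: intZ|exact: cst_integrable].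
refine (eq_integrable _ _ _ _ h); first exact: measurable_itv.
by move=> x _; rewrite /= EFinD.
Qed.

Lemma Rint_lin (a b k c : R) (g : R -> R) : a < b -> mu.-integrable `[a, b] (EFin \o g) ->
  Rintegral mu `[a, b] (fun x => k * g x + c) =
  k * Rintegral mu `[a, b] g + c * (b - a).
Proof.
move=> ab ig.
rewrite RintegralD; [|exact: measurable_itv|exact: intZ|exact: cst_integrable].
rewrite RintegralZl; [|exact: measurable_itv|exact: ig].
by rewrite Rintegral_cst; [rewrite -[X in fine X]/(mu `[a, b]) mu_itv|exact: measurable_itv].
Qed.


Lemma null_U (A B : set R) : measurable A -> measurable B ->
  mu A = 0%E -> mu B = 0%E -> mu (A `|` B) = 0%E.
Proof.
move=> mA mB hA hB; apply/eqP; rewrite eq_le measure_ge0 andbT.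
have := @measureU2 _ _ _ mu A B mA mB.
by rewrite -[X in (_ <= X + _)%E]/(mu A) -[X in (_ <= _ + X)%E]/(mu B) hA hB adde0.
Qed.

Lemma Dir_ge {a b : R} {v1 v2 : R -> R} : a < b -> W12 a b v1 -> W12 a b v2 ->
  ((((v1 b - v1 a) ^+ 2 + (v2 b - v2 a) ^+ 2) / (b - a))%:E <= Dir v1 v2 a b)%E.
Proof.
move=> ab W1 W2.
have [g1 [N1 [[mN1 N10 mg1 fin1] [d1 E1]]]] := W12_deriv ab W1.
have [g2 [N2 [[mN2 N20 mg2 fin2] [d2 E2]]]] := W12_deriv ab W2.
pose M := ((N1 `|` N2) `|` [set a]) `|` [set b].
have mM : measurable M.
  by apply: measurableU; [apply: measurableU; [exact: measurableU|exact: measurable_set1]|exact: measurable_set1].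
have M0 : mu M = 0%E.
  apply: null_U; [|exact: measurable_set1| |exact: lebesgue_measure_set1].
  - by apply: measurableU; [exact: measurableU|exact: measurable_set1].
  - apply: null_U; [exact: measurableU|exact: measurable_set1| |exact: lebesgue_measure_set1].
    exact: null_U.
have i1 := sq_integrable mg1 fin1.
have i2 := sq_integrable mg2 fin2.
have ig1 := g_integrable mg1 fin1.
have ig2 := g_integrable mg2 fin2.
have i12 : mu.-integrable `[a, b] (EFin \o (fun x => g1 x ^+ 2 + g2 x ^+ 2)).
  have h : mu.-integrable `[a, b] ((EFin \o (fun x => (g1 x ^+ 2)%R)) \+ (EFin \o (fun x => (g2 x ^+ 2)%R)))%E.
    by apply: integrableD => //; exact: measurable_itv.
  refine (eq_integrable _ _ _ _ h); first exact: measurable_itv.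
  by move=> x _; rewrite /= EFinD.
rewrite /Dir.
apply: (@le_trans _ _ (\int[mu]_(x in `[a, b] `\` M) ((g1 x ^+ 2 + g2 x ^+ 2)%:E))%E); last first.
  apply: (@le_trans _ _ (\int[mu]_(x in `[a, b] `\` M) ((derive1 v1 x) ^+ 2 + (derive1 v2 x) ^+ 2)%:E)%E).
    rewrite le_eqVlt; apply/orP; left; apply/eqP; apply: eq_integral.
    move=> x; rewrite inE /= in_itv /= => -[/andP[xa xb] nM].
    have na : x != a by apply/eqP => xa'; apply: nM; left; right.
    have nb : x != b by apply/eqP => xb'; apply: nM; right.
    have ax : a < x by rewrite lt_def na xa.
    have bx : x < b by rewrite lt_def eq_sym nb xb.
    rewrite d1 // ?d2 // => h; apply: nM; left; left; by [left|right].
  apply: ge0_le_integral_dom; first exact: subDsetl.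
  by move=> x _; rewrite lee_fin addr_ge0 // sqr_ge0.
have HH : (\int[mu]_(x in `[a, b]) ((g1 x ^+ 2 + g2 x ^+ 2)%:E) =
    \int[mu]_(x in `[a, b] `\` M) ((g1 x ^+ 2 + g2 x ^+ 2)%:E))%E.
  by apply: negligible_integral => //; exact: measurable_itv.
rewrite -HH.
have fin : (\int[mu]_(x in `[a, b]) ((g1 x ^+ 2 + g2 x ^+ 2)%:E))%E \is a fin_num.
  by apply: integrable_fin_num => //; exact: measurable_itv.
rewrite -(fineK fin) lee_fin.
have -> : fine (\int[mu]_(x in `[a, b]) ((g1 x ^+ 2 + g2 x ^+ 2)%:E))%E =
   Rintegral mu `[a, b] (fun x => g1 x ^+ 2 + g2 x ^+ 2) by [].
set c1 := (v1 b - v1 a) / (b - a).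
set c2 := (v2 b - v2 a) / (b - a).
have il1 := int_lin (2 * c1) 0 ig1.
have il2 := int_lin (2 * c2) (- (c1 ^+ 2 + c2 ^+ 2)) ig2.
have il : mu.-integrable `[a, b] (EFin \o (fun x => (2 * c1 * g1 x + 0) + (2 * c2 * g2 x + - (c1 ^+ 2 + c2 ^+ 2)))).
  have h : mu.-integrable `[a, b] ((EFin \o (fun x => (2 * c1 * g1 x + 0)%R)) \+
        (EFin \o (fun x => (2 * c2 * g2 x + - (c1 ^+ 2 + c2 ^+ 2))%R)))%E.
    by apply: integrableD => //; exact: measurable_itv.
  refine (eq_integrable _ _ _ _ h); first exact: measurable_itv.
  by move=> x _; rewrite /= EFinD.
have Hlow : Rintegral mu `[a, b] (fun x => (2 * c1 * g1 x + 0) + (2 * c2 * g2 x + - (c1 ^+ 2 + c2 ^+ 2)))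
    <= Rintegral mu `[a, b] (fun x => g1 x ^+ 2 + g2 x ^+ 2).
  apply: le_Rintegral; [exact: measurable_itv|exact: il|exact: i12|].
  move=> x _; have := sqr_ge0 (g1 x - c1); have := sqr_ge0 (g2 x - c2); nra.
apply: le_trans Hlow.
rewrite RintegralD; [|exact: measurable_itv|exact: il1|exact: il2].
rewrite !Rint_lin //.
have e1 : Rintegral mu `[a, b] g1 = v1 b - v1 a by rewrite E1; ring.
have e2 : Rintegral mu `[a, b] g2 = v2 b - v2 a by rewrite E2; ring.
rewrite e1 e2 /c1 /c2 le_eqVlt; apply/orP; left; apply/eqP.
field; lra.
Qed.

End Anal2.


Theorem mainTheorem5 (R : realType) (lo hi : nat -> R -> R) (phi : nat -> nat)
    (umin umax : R -> R) :
  (forall i : nat, (0 < i)%N -> cantor_pluridiamond i (lo i) (hi i)) ->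
  {homo phi : m n / (m < n)%N} ->
  unif_cvg01 (fun n => lo (phi n)) umin ->
  unif_cvg01 (fun n => hi (phi n)) umax ->
  dir_quasiminimizer 4 umin umax /\ branch_set umin umax = @cantorT R.
Proof.
move=> Hpd Hphi Hlo Hhi; split; last exact: (@branch_eq R lo hi phi umin umax Hpd Hphi Hlo Hhi).
move=> a b a0 ab b1 v1 v2 [[[W1 W2 _] [e1 e2 e3 e4]] _].
have P := @lim_P3 R lo hi phi umin umax Hpd Hphi Hlo Hhi.
have Hmin : forall y z, 0 <= y -> y <= z -> z <= 1 -> 0 <= umin z - umin y <= z - y.
  by move=> y z y0 yz z1; have [] := P y z y0 yz z1.
have Hmax : forall y z, 0 <= y -> y <= z -> z <= 1 -> 0 <= umax z - umax y <= z - y.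
  by move=> y z y0 yz z1; have [] := P y z y0 yz z1.
have H1 : (Dir umin umax a b <= (2 * (b - a))%:E)%E.
  apply: Dir_le2 => // x /andP[ax xb].
  have /andP[p1 p2] := @derive1_01 R umin x Hmin (ltac:(lra) : 0 < x) (ltac:(lra) : x < 1).
  have /andP[q1 q2] := @derive1_01 R umax x Hmax (ltac:(lra) : 0 < x) (ltac:(lra) : x < 1).
  nra.
have H2 := @Dir_ge R a b v1 v2 ab W1 W2.
rewrite e1 e2 e3 e4 in H2.
have [_ _ H3] := P a b a0 (ltW ab) b1.
set S := (umin b - umin a) ^+ 2 + (umax b - umax a) ^+ 2 in H2.
have H4 : 2 * (b - a) <= 4 * (S / (b - a)).
  rewrite mulrA ler_pdivlMr; last lra.
  rewrite /S.
  set d1 := umin b - umin a in H3 *.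
  set d2 := umax b - umax a in H3 *.
  have h5 : (b - a) * (b - a) <= (d1 + d2) * (d1 + d2) by apply: ler_pM; lra.
  have h6 := sqr_ge0 (d1 - d2).
  have E5 : (d1 + d2) * (d1 + d2) = d1 ^+ 2 + d2 ^+ 2 + 2 * (d1 * d2) by ring.
  have E6 : (d1 - d2) ^+ 2 = d1 ^+ 2 + d2 ^+ 2 - 2 * (d1 * d2) by ring.
  have E7 : 2 * (b - a) * (b - a) = 2 * ((b - a) * (b - a)) by ring.
  rewrite E5 in h5; rewrite E6 in h6; rewrite E7.
  lra.
apply: le_trans H1 _.
apply: le_trans (lee_wpmul2l _ H2); last by rewrite lee_fin.
by rewrite -EFinM lee_fin.
Qed.
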